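(* In the setting of the context, \[ \lim_{u\to u_\infty+0}\psi(u)=0,\qquad \lim_{u\to u_\infty+0}\Bigl(\tilde E e^{-\delta\varphi(u)}+\tilde S e^{(\beta/\gamma)\tilde R}e^{-\delta\varphi(u)}\int_u^{u_0}e^{\delta\varphi(v)}dv\Bigr)=0 . \]
   Context: Let $\beta,\gamma,\delta>0$ be constants and $\tilde S,\tilde E,\tilde I,\tilde R$ real numbers with $N:=\tilde S+\tilde E+\tilde I+\tilde R>0$. Standing assumptions: (A1) $\tilde I>0$; (A2) $\tilde E>(\gamma/\delta)\tilde I$; (A3) $\tilde S>\delta\tilde E/(\beta\tilde I)$; (A4) $\tilde R\ge 0$ and $N>\tilde S e^{(\beta/\gamma)\tilde R}+\tilde R$. Let $\alpha$ be the unique solution in $(\tilde R,N)$ of $x=N-\tilde S e^{(\beta/\gamma)\tilde R}e^{-(\beta/\gamma)x}$, and assume (A5) $\tilde S<(\gamma/\beta)e^{(\beta/\gamma)(\alpha-\tilde R)}$. Put $u_0:=e^{-(\beta/\gamma)\tilde R}$, $u_\infty:=e^{-(\beta/\gamma)\alpha}$. Let $\psi$ be the unique function, continuous and positive on $(u_\infty,u_0]$ and $C^1$ on $(u_\infty,u_0)$, satisfying $\psi'(u)\psi(u)-\frac{\gamma+\delta}{u}\psi(u)=-\delta\,\frac{\beta N-\beta\tilde S e^{(\beta/\gamma)\tilde R}u+\gamma\log u}{u}$ on $(u_\infty,u_0)$ and $\psi(u_0)=\beta\tilde I$. Let $\varphi(u):=\int_u^{u_0}\frac{d\xi}{\xi\psi(\xi)}$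 for $u\in(u_\infty,u_0]$. *)

(* Defs.v *)
From Stdlib Require Import Reals.
From Coquelicot Require Import Coquelicot.
Open Scope R_scope.

Definition varphi (psi : R -> R) (u0 u : R) : R :=
  RInt (fun xi => / (xi * psi xi)) u u0.

(* Main.v *)
Require Import Defs.
From Stdlib Require Import Reals Lra.
From Coquelicot Require Import Coquelicot.
Open Scope R_scope.

Definition ext (psi : R -> R) (b y : R) : R := if Rle_dec y b then psi y else psi b.

Lemma ext_eq psi b y : y <= b -> ext psi b y = psi y.
Proof. intros h; unfold ext; destruct (Rle_dec y b); [reflexivity|lra]. Qed.

Lemma ext_gt psi b y : b < y -> ext psi b y = psi b.
Proof. intros h; unfold ext; destruct (Rle_dec y b); [lra|reflexivity]. Qed.

Lemma ext_cont (psi : R -> R) (a b : R)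
  (hc : forall x, a < x < b -> continuous psi x)
  (hl : filterlim psi (at_left b) (locally (psi b))) :
  forall x, a < x -> continuous (ext psi b) x.
Proof.
  intros x hx.
  destruct (Rlt_le_dec x b) as [h|h].
  - apply continuous_ext_loc with psi; [|apply hc; lra].
    assert (hp : 0 < b - x) by lra.
    exists (mkposreal _ hp). intros y hy. simpl in hy.
    unfold ball in hy; simpl in hy; unfold AbsRing_ball, abs, minus, plus, opp in hy; simpl in hy.
    apply Rabs_def2 in hy. rewrite ext_eq; [reflexivity|lra].
  - destruct (Rle_lt_or_eq_dec _ _ h) as [h2|h2].
    + apply continuous_ext_loc with (fun _ => psi b); [|apply continuous_const].
      assert (hp : 0 < x - b) by lra.
      exists (mkposreal _ hp). intros y hy. simpl in hy.
      unfold ball in hy; simpl in hy; unfold AbsRing_ball, abs, minus, plus, opp in hy; simpl in hy.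
      apply Rabs_def2 in hy. rewrite ext_gt; [reflexivity|lra].
    + subst x. unfold continuous. apply filterlim_locally. intros eps.
      rewrite ext_eq by lra.
      pose proof (proj1 (filterlim_locally _ _) hl eps) as H.
      unfold at_left, within in H.
      apply filter_imp with (2:=H). intros y Hy.
      destruct (Rlt_le_dec y b) as [h3|h3].
      * rewrite ext_eq by lra. apply Hy; exact h3.
      * assert (e : ext psi b y = psi b).
        { unfold ext; destruct (Rle_dec y b); [assert (y = b) by lra; subst; reflexivity|reflexivity]. }
        rewrite e. apply ball_center.
Qed.

Lemma inv_cont (g : R -> R) x : continuous g x -> g x <> 0 -> continuous (fun y => / g y) x.
Proof.
  intros H Hn. apply continuity_pt_filterlim.
  apply (continuity_pt_inv g x); [apply continuity_pt_filterlim; exact H | exact Hn].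
Qed.

Lemma lim_right (f : R -> R) a l : continuous f a -> f a = l -> filterlim f (at_right a) (locally l).
Proof.
  intros H e; subst. apply (filterlim_filter_le_1 (F := locally a)); [apply filter_le_within|exact H].
Qed.

Lemma squeeze (g h : R -> R) a b : a < b -> (forall u, a < u < b -> 0 <= g u <= h u) ->
  filterlim h (at_right a) (locally 0) -> filterlim g (at_right a) (locally 0).
Proof.
  intros hab H Hh.
  apply (filterlim_le_le (fun _ => 0) g h (Finite 0)).
  - assert (hp : 0 < b - a) by lra. exists (mkposreal _ hp). intros y hy hay. simpl in hy.
    unfold ball in hy; simpl in hy; unfold AbsRing_ball, abs, minus, plus, opp in hy; simpl in hy.
    apply Rabs_def2 in hy. apply H; lra.
  - apply filterlim_const.
  - exact Hh.
Qed.

Lemma ex_RInt_low (f : R -> R) a b y : a < y -> a < b -> (forall z, a < z -> continuous f z) -> ex_RInt f y b.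
Proof.
  intros hy hb hc. apply (ex_RInt_continuous (V := R_CompleteNormedModule)). intros z [h1 h2]. apply hc.
  apply Rlt_le_trans with (Rmin y b); [apply Rmin_glb_lt; lra| exact h1].
Qed.

Lemma deriv_RInt_low (f : R -> R) a b x : a < x -> a < b -> (forall z, a < z -> continuous f z) ->
  is_derive (fun y => RInt f y b) x (- f x).
Proof.
  intros hx hb hc. apply (is_derive_RInt' f (fun y => RInt f y b) x b).
  - assert (hp : 0 < x - a) by lra. exists (mkposreal _ hp). intros y hy. simpl in hy.
    unfold ball in hy; simpl in hy; unfold AbsRing_ball, abs, minus, plus, opp in hy; simpl in hy.
    apply Rabs_def2 in hy. apply (RInt_correct (V := R_CompleteNormedModule)). apply ex_RInt_low with a; [lra|lra|exact hc].
  - apply hc; exact hx.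
Qed.

Lemma der_cont (f : R -> R) x l : is_derive f x l -> continuous f x.
Proof. intros H. apply (ex_derive_continuous (K := R_AbsRing) (V := R_NormedModule)). exists l; exact H. Qed.

Theorem proposition2
  (beta gamma delta St Et It Rt alpha : R) (psi : R -> R)
  (hb : 0 < beta) (hg : 0 < gamma) (hd : 0 < delta)
  (hN : 0 < St + Et + It + Rt)
  (A1 : 0 < It)
  (A2 : Et > (gamma / delta) * It)
  (A3 : St > delta * Et / (beta * It))
  (A4a : 0 <= Rt)
  (A4b : St + Et + It + Rt > St * exp ((beta / gamma) * Rt) + Rt)
  (halpha_lo : Rt < alpha) (halpha_hi : alpha < St + Et + It + Rt)
  (halpha_eq : alpha = (St + Et + It + Rt)
      - St * exp ((beta / gamma) * Rt) * exp (- (beta / gamma) * alpha))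
  (A5 : St < (gamma / beta) * exp ((beta / gamma) * (alpha - Rt)))
  (hpsi_pos : forall u, exp (- (beta / gamma) * alpha) < u <= exp (- (beta / gamma) * Rt) ->
      0 < psi u)
  (hpsi_C1 : forall u, exp (- (beta / gamma) * alpha) < u < exp (- (beta / gamma) * Rt) ->
      ex_derive psi u /\ continuous (Derive psi) u)
  (hpsi_cont_u0 : filterlim psi (at_left (exp (- (beta / gamma) * Rt)))
      (locally (psi (exp (- (beta / gamma) * Rt)))))
  (hpsi_ode : forall u, exp (- (beta / gamma) * alpha) < u < exp (- (beta / gamma) * Rt) ->
      Derive psi u * psi u - (gamma + delta) / u * psi u =
      - delta * (beta * (St + Et + It + Rt) - beta * St * exp ((beta / gamma) * Rt) * u
                 + gamma * ln u) / u)
  (hpsi_u0 : psi (exp (- (beta / gamma) * Rt)) = beta * It) :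
  filterlim psi (at_right (exp (- (beta / gamma) * alpha))) (locally 0) /\
  filterlim (fun u =>
      Et * exp (- delta * varphi psi (exp (- (beta / gamma) * Rt)) u)
      + St * exp ((beta / gamma) * Rt)
          * exp (- delta * varphi psi (exp (- (beta / gamma) * Rt)) u)
          * RInt (fun v => exp (delta * varphi psi (exp (- (beta / gamma) * Rt)) v))
                 u (exp (- (beta / gamma) * Rt)))
    (at_right (exp (- (beta / gamma) * alpha))) (locally 0).
Proof.
  set (a := exp (- (beta / gamma) * alpha)) in *.
  set (b := exp (- (beta / gamma) * Rt)) in *.
  set (N := St + Et + It + Rt) in *.
  set (c := exp ((beta / gamma) * Rt)) in *.
  set (k := beta * St * c).
  assert (ha : 0 < a) by apply exp_pos.
  assert (hab : a < b).
  { apply exp_increasing. assert (0 < beta / gamma) by (apply Rdiv_lt_0_compat; lra). nra. }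
  assert (hEt : 0 < Et).
  { assert (0 <= gamma / delta * It). { apply Rmult_le_pos; [apply Rlt_le, Rdiv_lt_0_compat|]; lra. } lra. }
  set (F := fun u => beta * N - k * u + gamma * ln u).
  assert (hF_d : forall y, 0 < y -> is_derive F y (- k + gamma / y)).
  { intros y hy. unfold F. auto_derive; [lra|field; lra]. }
  assert (hF_c : forall y, 0 < y -> continuous F y).
  { intros y hy. apply (der_cont _ _ _ (hF_d y hy)). }
  assert (hFa : F a = 0).
  { assert (e : k * a = beta * (N - alpha)).
    { unfold k. rewrite halpha_eq. ring. }
    unfold F. rewrite e. unfold a. rewrite ln_exp. field. lra. }
  assert (hcb : c * b = 1).
  { unfold c, b. rewrite <- exp_plus. replace (beta / gamma * Rt + - (beta / gamma) * Rt) with 0 by ring. apply exp_0. }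
  assert (hFb : F b - psi b = beta * Et).
  { unfold F. unfold b at 2. rewrite ln_exp. rewrite hpsi_u0. unfold k, N.
    replace (beta * St * c * b) with (beta * St * (c * b)) by ring. rewrite hcb. field. lra. }
  set (pt := ext psi b).
  assert (hpsi_c : forall x, a < x < b -> continuous psi x).
  { intros x hx. destruct (hpsi_C1 x hx) as [[l hl] _]. exact (der_cont _ _ _ hl). }
  assert (hpt_c : forall y, a < y -> continuous pt y).
  { intros y hy. apply (ext_cont psi a b); assumption. }
  assert (hpt_pos : forall y, a < y -> 0 < pt y).
  { intros y hy. unfold pt. destruct (Rle_dec y b) as [h|h].
    - rewrite ext_eq by exact h. apply hpsi_pos; lra.
    - rewrite ext_gt by lra. apply hpsi_pos; lra. }
  set (ft := fun xi => / (xi * pt xi)).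
  assert (hft_c : forall y, a < y -> continuous ft y).
  { intros y hy. unfold ft. apply inv_cont.
    - apply (continuous_mult (fun z => z) pt); [apply continuous_id| apply hpt_c; exact hy].
    - assert (0 < pt y) by (apply hpt_pos; exact hy). apply Rgt_not_eq. apply Rmult_lt_0_compat; lra. }
  set (phit := fun y => RInt ft y b).
  assert (hphi_d : forall y, a < y -> is_derive phit y (- ft y)).
  { intros y hy. apply (deriv_RInt_low ft a b y); assumption. }
  set (Eh := fun y => exp (delta * phit y)).
  assert (hEh_d : forall y, a < y -> is_derive Eh y ((- ft y) * (delta * Eh y))).
  { intros y hy. unfold Eh.
    apply (is_derive_comp (fun z => exp (delta * z)) phit y).
    - auto_derive; [exact I| ring].
    - apply hphi_d; exact hy. }
  assert (hEh_c : forall y, a < y -> continuous Eh y).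
  { intros y hy. apply (der_cont _ _ _ (hEh_d y hy)). }
  set (J := fun y => RInt Eh y b).
  assert (hJ_d : forall y, a < y -> is_derive J y (- Eh y)).
  { intros y hy. apply (deriv_RInt_low Eh a b y); assumption. }
  assert (hJ_c : forall y, a < y -> continuous J y).
  { intros y hy. apply (der_cont _ _ _ (hJ_d y hy)). }
  set (Ht := fun y => (F y - pt y) * Eh y - k * J y).
  assert (hpt_d : forall y, a < y < b -> is_derive pt y (Derive psi y)).
  { intros y hy. apply (is_derive_ext_loc psi).
    - assert (hp : 0 < b - y) by lra. exists (mkposreal _ hp). intros z hz. simpl in hz.
      unfold ball in hz; simpl in hz; unfold AbsRing_ball, abs, minus, plus, opp in hz; simpl in hz.
      apply Rabs_def2 in hz. unfold pt. rewrite ext_eq; [reflexivity|lra].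
    - apply Derive_correct. apply hpsi_C1; exact hy. }
  assert (hHt_d : forall y, a < y < b -> is_derive Ht y 0).
  { intros y hy.
    assert (hy0 : 0 < y) by lra.
    pose proof (is_derive_minus _ _ _ _ _ (hF_d y hy0) (hpt_d y hy)) as H1.
    pose proof (is_derive_mult _ _ _ _ _ H1 (hEh_d y (proj1 hy)) Rmult_comm) as H2.
    pose proof (is_derive_scal J y k _ (hJ_d y (proj1 hy))) as H3.
    pose proof (is_derive_minus _ _ _ _ _ H2 H3) as H4.
    unfold Ht. 
    match type of H4 with is_derive _ _ ?v => replace 0 with v end.
    { exact H4. }
    unfold minus, plus, opp, mult, scal; simpl. unfold mult; simpl.
    assert (hpy : 0 < psi y) by (apply hpsi_pos; lra).
    assert (ept : pt y = psi y) by (unfold pt; apply ext_eq; lra).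
    unfold ft. rewrite ept.
    pose proof (hpsi_ode y hy) as hode. fold N c in hode.
    assert (eD : Derive psi y = ((gamma + delta) / y * psi y - delta * F y / y) / psi y).
    { assert (e1 : Derive psi y * psi y = (gamma + delta) / y * psi y - delta * F y / y).
      { replace (Derive psi y * psi y) with ((Derive psi y * psi y - (gamma+delta)/y*psi y) + (gamma+delta)/y*psi y) by ring.
        rewrite hode. unfold F, k. field. lra. }
      rewrite <- e1. field. lra. }
    rewrite eD. field. split; lra. }
  assert (hHt_c : forall y, a < y -> continuous Ht y).
  { intros y hy.
    assert (hy0 : 0 < y) by lra.
    pose proof (continuous_minus (K := R_AbsRing) (V := R_NormedModule) F pt y (hF_c y hy0) (hpt_c y hy)) as C1.
    pose proof (continuous_mult (K := R_AbsRing) _ Eh y C1 (hEh_c y hy)) as C2.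
    pose proof (continuous_scal (K := R_AbsRing) (V := R_NormedModule) (fun _ => k) J y (continuous_const _ _) (hJ_c y hy)) as C3.
    pose proof (continuous_minus (K := R_AbsRing) (V := R_NormedModule) _ _ y C2 C3) as C4.
    exact C4. }
  assert (key : forall u, a < u < b -> Ht u = beta * Et).
  { intros u hu.
    destruct (MVT_gen Ht u b (fun _ => 0)) as [x [_ hx]].
    - intros x hx. rewrite Rmin_left in hx by lra. rewrite Rmax_right in hx by lra.
      apply hHt_d; lra.
    - intros x hx. rewrite Rmin_left in hx by lra. rewrite Rmax_right in hx by lra.
      apply continuity_pt_filterlim. apply hHt_c; lra.
    - assert (eHb : Ht b = beta * Et).
      { unfold Ht, J, Eh, phit. rewrite !RInt_point. unfold zero; simpl.
        unfold pt; rewrite ext_eq by lra. rewrite Rmult_0_r, exp_0. rewrite <- hFb. ring. }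
      lra. }
  assert (hphi_eq : forall u, a < u <= b -> varphi psi b u = phit u).
  { intros u hu. unfold varphi, phit, ft. apply RInt_ext.
    intros x hx. rewrite Rmin_left in hx by lra. rewrite Rmax_right in hx by lra.
    unfold pt. rewrite ext_eq by lra. reflexivity. }
  assert (hJ_eq : forall u, a < u <= b -> RInt (fun v => exp (delta * varphi psi b v)) u b = J u).
  { intros u hu. unfold J, Eh. apply RInt_ext.
    intros x hx. rewrite Rmin_left in hx by lra. rewrite Rmax_right in hx by lra.
    rewrite hphi_eq by lra. reflexivity. }
  assert (hJpos : forall u, a < u < b -> 0 <= J u).
  { intros u hu. unfold J. apply RInt_ge_0; [lra| |].
    - apply ex_RInt_low with a; [lra|lra|exact hEh_c].
    - intros x _. unfold Eh. apply Rlt_le, exp_pos. }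
  assert (hSt : 0 < St).
  { assert (0 < delta * Et / (beta * It)).
    { apply Rdiv_lt_0_compat; [nra|nra]. } lra. }
  assert (hk : 0 < k).
  { unfold k. apply Rmult_lt_0_compat; [apply Rmult_lt_0_compat; lra| unfold c; apply exp_pos]. }
  assert (hG : forall u, a < u < b -> F u - psi u = (beta * Et + k * J u) / Eh u).
  { intros u hu. pose proof (key u hu) as K. unfold Ht in K.
    assert (ept : pt u = psi u) by (unfold pt; apply ext_eq; lra).
    rewrite ept in K. assert (0 < Eh u) by (unfold Eh; apply exp_pos).
    apply Rmult_eq_reg_r with (Eh u); [|lra]. field_simplify; [|lra]. lra. }
  assert (hG0 : forall u, a < u < b -> 0 <= F u - psi u).
  { intros u hu. rewrite hG by exact hu.
    assert (0 < Eh u) by (unfold Eh; apply exp_pos).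
    pose proof (hJpos u hu). apply Rlt_le, Rdiv_lt_0_compat; [nra|lra]. }
  split.
  - apply (squeeze psi F a b hab).
    + intros u hu. pose proof (hG0 u hu). assert (0 < psi u) by (apply hpsi_pos; lra). lra.
    + apply lim_right; [apply hF_c; exact ha| exact hFa].
  - apply (squeeze _ (fun u => F u / beta) a b hab).
    + intros u hu. rewrite hphi_eq by lra. rewrite hJ_eq by lra.
      assert (eE : exp (- delta * phit u) = / Eh u).
      { unfold Eh. rewrite <- exp_Ropp. f_equal; ring. }
      assert (0 < Eh u) by (unfold Eh; apply exp_pos).
      assert (ex : Et * exp (- delta * phit u) + St * c * exp (- delta * phit u) * J u = (F u - psi u) / beta).
      { rewrite eE, (hG u hu). unfold k. field. split; lra. }
      rewrite ex. pose proof (hG0 u hu). assert (0 < psi u) by (apply hpsi_pos; lra).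
      split; unfold Rdiv; apply Rmult_le_compat_r || apply Rmult_le_pos; try (apply Rlt_le, Rinv_0_lt_compat; lra); lra.
    + apply lim_right.
      * apply (continuous_mult (K := R_AbsRing) F (fun _ => / beta) a); [apply hF_c; exact ha| apply continuous_const].
      * rewrite hFa. unfold Rdiv. ring.
Qed.
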